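(* Let $v>3$ and let $(X,\mathcal{B})$ be a partial STS$(v)$ with $X=\{1,\dots,v\}$. Then there is a sequencing $\pi=[x_1\,x_2\,\cdots\,x_v]$ of $X$ that is $3$-good for $(X,\mathcal{B})$, i.e. $\{x_i,x_{i+1},x_{i+2}\}\notin\mathcal{B}$ for all $1\le i\le v-2$.
   Context: A partial Steiner triple system of order $v$, PSTS$(v)$, is a pair $(X,\mathcal{B})$ where $X$ is a set of $v$ points and $\mathcal{B}$ is a set of 3-subsets of $X$ (blocks) such that every pair of distinct points lies in at most one block. A sequencing of $X$ is an ordering $[x_1\,x_2\,\cdots\,x_v]$ of all points of $X$, each appearing exactly once. It is $3$-good if no three consecutive points form a block. *)

(* Defs.v *)
From mathcomp Require Import all_boot.
Set Implicit Arguments. Unset Strict Implicit. Unset Printing Implicit Defensive.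

(* A partial Steiner triple system on the point set 'I_v (= {1..v} shifted to {0..v-1}):
   every block is a 3-subset, and every pair of distinct points lies in at most one block. *)
Definition is_PSTS (v : nat) (B : {set {set 'I_v}}) : Prop :=
  (forall b, b \in B -> #|b| = 3) /\
  (forall x y : 'I_v, x != y ->
     forall b1 b2, b1 \in B -> b2 \in B ->
       x \in b1 -> y \in b1 -> x \in b2 -> y \in b2 -> b1 = b2).

Definition is_sequencing (v : nat) (s : seq 'I_v) : Prop :=
  uniq s /\ size s = v.

Definition three_good (v : nat) (B : {set {set 'I_v}}) (s : seq 'I_v) : Prop :=
  forall (x0 : 'I_v) (i : nat), i + 2 < size s ->
    [set nth x0 s i; nth x0 s i.+1; nth x0 s i.+2] \notin B.

(* Main.v *)
Require Import Defs.
From mathcomp Require Import all_boot.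
Set Implicit Arguments. Unset Strict Implicit.

Ltac s3 := let w := fresh "w" in apply/setP=> w; rewrite !inE; repeat match goal with |- context [w == ?x] => case: (w == x) end; done.

Section S.
Variable v : nat.
Variable B : {set {set 'I_v}}.

Lemma s3A (x y z : 'I_v) : [set x; y; z] = [set y; x; z].
Proof. apply/setP=> w; rewrite !inE; by case: (w == x); case: (w == y); case: (w == z). Qed.
Lemma s3B (x y z : 'I_v) : [set x; y; z] = [set x; z; y].
Proof. apply/setP=> w; rewrite !inE; by case: (w == x); case: (w == y); case: (w == z). Qed.

Lemma F1 (HB : is_PSTS B) (a b p q : 'I_v) : a != b -> p != a -> p != b ->
  [set a; b; p] \in B -> [set a; b; q] \in B -> p = q.
Proof.
move=> Hab Hpa Hpb H1 H2; case: HB => _ H.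
have E := H a b Hab _ _ H1 H2.
have: p \in [set a; b; q].
  by rewrite -E ?inE ?eqxx ?orbT.
rewrite !inE (negbTE Hpa) (negbTE Hpb) /= => /eqP //.
Qed.

Lemma tg_small (s : seq 'I_v) : size s <= 2 -> three_good B s.
Proof. move=> Hs x0 i Hi; exfalso; move: Hi; rewrite ltnNge. by rewrite (leq_trans Hs) // addn2. Qed.

Lemma tg_cons (a b c : 'I_v) t : [set a; b; c] \notin B -> three_good B [:: b, c & t] ->
  three_good B [:: a, b, c & t].
Proof.
move=> H1 H2 x0 [|i] Hi //=.
exact: (H2 x0 i).
Qed.

Lemma perm_swap (x y : 'I_v) s : perm_eq [:: x, y & s] [:: y, x & s].
Proof. apply/permP=> P /=; by rewrite addnCA. Qed.

Lemma uniq_sw (b x y : 'I_v) s : uniq [:: b, x, y & s] = uniq [:: b, y, x & s].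
Proof. apply: perm_uniq; rewrite perm_cons; exact: perm_swap. Qed.

Lemma perm_rot3 (r p q : 'I_v) s : perm_eq [:: r, p, q & s] [:: p, q, r & s].
Proof. apply/permP=> P /=; rewrite addnCA; congr (_ + _); by rewrite addnCA. Qed.

Definition cond (b : 'I_v) (R : seq 'I_v) : Prop :=
  match R with
  | [:: p; q] => [set b; p; q] \notin B
  | [:: p; q; r] => [set p; q; r] \notin B
  | _ => True
  end.

Lemma Lmain (HB : is_PSTS B) n : forall (a b : 'I_v) R, size R = n.+2 ->
  uniq [:: a, b & R] -> cond b R ->
  exists t, perm_eq t R /\ three_good B [:: a, b & t].
Proof.
elim: n => [|n IH] a b R.
  case: R => [|p [|q [|? ?]]] //= _ Hu Hc.
  move: Hu; rewrite /= !inE !negb_or => /and4P [/and3P[Hab Hap Haq] /andP[Hbp Hbq] Hpq _].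
  case: (boolP ([set a; b; p] \in B)) => H.
    have Hq : [set a; b; q] \notin B.
      apply/negP=> Hq; move/eqP: Hpq; apply.
      apply: (F1 HB Hab _ _ H Hq); by rewrite eq_sym.

    exists [:: q; p]; split; first by rewrite (perm_swap q p [::]).
    apply: tg_cons => //; apply: tg_cons; first by rewrite s3B.
    exact: tg_small.
  exists [:: p; q]; split => //.
  apply: tg_cons => //; apply: tg_cons => //; exact: tg_small.
case: R => [|p [|q [|r R']]] //= [Hs] Hu Hc.
have Hu' := Hu.
move: Hu'; rewrite /= !inE !negb_or => /and5P [/and5P[Hab Hap Haq _ _] /and4P[Hbp Hbq Hbr _] /and3P[Hpq Hpr _] /andP[Hqr _] _].
have Hpq2 : ([set a; b; p] \in B) -> [set a; b; q] \notin B.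
  move=> H; apply/negP=> Hq; move/eqP: Hpq; apply.
  apply: (F1 HB Hab _ _ H Hq); by rewrite eq_sym.
have Uq : uniq [:: b, q, p, r & R'].
  rewrite uniq_sw; by case/andP: Hu.
have Up : uniq [:: b, p, q, r & R'] by case/andP: Hu.
case: n IH Hs => [|n] IH Hs.
  case: R' Hs Hc Up Uq {Hu} => // _ Hc Up Uq.
  case: (boolP ([set a; b; p] \in B)) => H.
    have Hc' : [set q; p; r] \notin B by rewrite s3A.
    have [t [Ht Hg]] := IH b q [:: p; r] erefl Uq Hc'.
    exists (q :: t); split.
      by rewrite (perm_trans _ (perm_swap q p _)) // perm_cons.
    by apply: tg_cons => //; apply: Hpq2.
  have [t [Ht Hg]] := IH b p [:: q; r] erefl Up Hc.
  exists (p :: t); split; first by rewrite perm_cons.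
  exact: tg_cons.
case: n IH Hs => [|n] IH Hs.
  case: R' Hs Hc Up Uq {Hu} => [|u [|? ?]] // _ _ Up Uq.
  have Ur : uniq [:: b; r; p; q; u].
    by rewrite (perm_uniq (_ : perm_eq _ [:: b; p; q; r; u])) // perm_cons perm_rot3.
  have Uq' := Uq.
  have Hpr2 : ([set a; b; p] \in B) -> [set a; b; r] \notin B.
    move=> H; apply/negP=> Hq; move/eqP: Hpr; apply.
    apply: (F1 HB Hab _ _ H Hq); by rewrite eq_sym.
  have Hqr2 : ([set a; b; q] \in B) -> [set a; b; r] \notin B.
    move=> H; apply/negP=> Hq; move/eqP: Hqr; apply.
    apply: (F1 HB Hab _ _ H Hq); by rewrite eq_sym.
  move: (Up); rewrite /= !inE !negb_or => /and5P[_ /and3P[_ _ Hpu] /andP[_ Hqu] Hru _].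
  have Bpq : [set q; r; u] \in B -> [set p; r; u] \notin B.
    move=> H; apply/negP=> H'; move/eqP: Hpq; apply; apply/esym.
    have H1 : [set r; u; q] \in B by rewrite (_ : [set r; u; q] = [set q; r; u]) //; s3.
    have H2 : [set r; u; p] \in B by rewrite (_ : [set r; u; p] = [set p; r; u]) //; s3.
    apply: (F1 HB _ _ _ H1 H2); first [done | by rewrite eq_sym].
  have Bpr : [set q; r; u] \in B -> [set p; q; u] \notin B.
    move=> H; apply/negP=> H'; move/eqP: Hpr; apply; apply/esym.
    have H1 : [set q; u; r] \in B by rewrite (_ : [set q; u; r] = [set q; r; u]) //; s3.
    have H2 : [set q; u; p] \in B by rewrite (_ : [set q; u; p] = [set p; q; u]) //; s3.
    apply: (F1 HB _ _ _ H1 H2); first [done | by rewrite eq_sym].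
  have Bqr : [set p; r; u] \in B -> [set p; q; u] \notin B.
    move=> H; apply/negP=> H'; move/eqP: Hqr; apply; apply/esym.
    have H1 : [set p; u; r] \in B by rewrite (_ : [set p; u; r] = [set p; r; u]) //; s3.
    have H2 : [set p; u; q] \in B by rewrite (_ : [set p; u; q] = [set p; q; u]) //; s3.
    apply: (F1 HB _ _ _ H1 H2); first [done | by rewrite eq_sym].
  case: (boolP ([set a; b; p] \in B)) => Ap; case: (boolP ([set q; r; u] \in B)) => Bp.
  -
    have Ar := Hpr2 Ap.
    have [t [Ht Hg]] := IH b r [:: p; q; u] erefl Ur (Bpr Bp).
    exists (r :: t); split; last by apply: tg_cons.
    apply: (perm_trans (y := [:: r, p, q & [:: u]])); first by rewrite perm_cons.
    exact: perm_rot3.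
  -
    have Aq := Hpq2 Ap.
    case: (boolP ([set p; r; u] \in B)) => Bq.
      have [t [Ht Hg]] := IH b r [:: p; q; u] erefl Ur (Bqr Bq).
      exists (r :: t); split; last exact: tg_cons (Hpr2 Ap) Hg.
      apply: (perm_trans (y := [:: r, p, q & [:: u]])); first by rewrite perm_cons.
      exact: perm_rot3.
    have [t [Ht Hg]] := IH b q [:: p; r; u] erefl Uq' Bq.
    exists (q :: t); split; last by apply: tg_cons.
    by rewrite (perm_trans _ (perm_swap q p _)) // perm_cons.
  -
    have Bq := Bpq Bp.
    case: (boolP ([set a; b; q] \in B)) => Aq.
      have [t [Ht Hg]] := IH b r [:: p; q; u] erefl Ur (Bpr Bp).
      exists (r :: t); split; last exact: tg_cons (Hqr2 Aq) Hg.
      apply: (perm_trans (y := [:: r, p, q & [:: u]])); first by rewrite perm_cons.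
      exact: perm_rot3.
    have [t [Ht Hg]] := IH b q [:: p; r; u] erefl Uq' Bq.
    exists (q :: t); split; last by apply: tg_cons.
    by rewrite (perm_trans _ (perm_swap q p _)) // perm_cons.
  - have [t [Ht Hg]] := IH b p [:: q; r; u] erefl Up Bp.
    exists (p :: t); split; first by rewrite perm_cons.
    exact: tg_cons.
case: R' Hs Hc Up Uq {Hu} => [|u [|w R'']] // Hs _ Up Uq.
have Hs' : forall x y : 'I_v, size [:: x, y, u, w & R''] = n.+4 by move=> x y; rewrite /= -Hs.
case: (boolP ([set a; b; p] \in B)) => H.
  have [t [Ht Hg]] := IH b q [:: p, r, u, w & R''] (Hs' _ _) Uq I.
  exists (q :: t); split.
    by rewrite (perm_trans _ (perm_swap q p _)) // perm_cons.
  by apply: tg_cons => //; apply: Hpq2.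
have [t [Ht Hg]] := IH b p [:: q, r, u, w & R''] (Hs' _ _) Up I.
exists (p :: t); split; first by rewrite perm_cons.
exact: tg_cons.
Qed.

End S.

Theorem theorem2 (v : nat) (B : {set {set 'I_v}}) :
  3 < v -> is_PSTS B ->
  exists s : seq 'I_v, is_sequencing s /\ three_good B s.
Proof.
move=> Hv HB.
suff: exists s, perm_eq s (enum 'I_v) /\ three_good B s.
  case=> s [Hp Hg]; exists s; split => //; split.
    by rewrite (perm_uniq Hp) enum_uniq.
  by rewrite (perm_size Hp) size_enum_ord.
have Hu : uniq (enum 'I_v) by apply: enum_uniq.
move: (enum 'I_v) Hu (size_enum_ord v) => E Hu Hsz.
case: E Hu Hsz => [|e0 [|e1 [|e2 [|e3 [|e4 [|e5 R']]]]]] Hu Hsz; try by rewrite -Hsz in Hv.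
- move: (Hu); rewrite /= !inE !negb_or => /and4P[/and3P[H01 H02 H03] /andP[H12 H13] H23 _].
  case: (boolP ([set e1; e2; e3] \in B)) => H.
    have H' : [set e0; e2; e3] \notin B.
      apply/negP=> H'; move/eqP: H01; apply; apply/esym.
      have H1 : [set e2; e3; e1] \in B by rewrite (_ : [set e2; e3; e1] = [set e1; e2; e3]) //; s3.
      have H2 : [set e2; e3; e0] \in B by rewrite (_ : [set e2; e3; e0] = [set e0; e2; e3]) //; s3.
      apply: (F1 HB _ _ _ H1 H2); first [done | by rewrite eq_sym].
    have Hu' : uniq [:: e1; e0; e2; e3] by rewrite (perm_uniq (perm_swap _ _ _)).
    have [t [Ht Hg]] := @Lmain _ _ HB _ e1 e0 [:: e2; e3] erefl Hu' H'.
    exists [:: e1, e0 & t]; split => //.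
    apply: (perm_trans _ (perm_swap e1 e0 _)); by rewrite !perm_cons.
  have [t [Ht Hg]] := @Lmain _ _ HB _ e0 e1 [:: e2; e3] erefl Hu H.
  exists [:: e0, e1 & t]; split => //; by rewrite !perm_cons.
- move: (Hu); rewrite /= !inE !negb_or => /and5P[_ /and3P[H12 H13 H14] /andP[H23 H24] H34 _].
  case: (boolP ([set e2; e3; e4] \in B)) => H.
    have H' : [set e1; e3; e4] \notin B.
      apply/negP=> H'; move/eqP: H12; apply; apply/esym.
      have H1 : [set e3; e4; e2] \in B by rewrite (_ : [set e3; e4; e2] = [set e2; e3; e4]) //; s3.
      have H2 : [set e3; e4; e1] \in B by rewrite (_ : [set e3; e4; e1] = [set e1; e3; e4]) //; s3.
      apply: (F1 HB _ _ _ H1 H2); first [done | by rewrite eq_sym].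
    have Hu' : uniq [:: e0; e2; e1; e3; e4] by rewrite uniq_sw.
    have [t [Ht Hg]] := @Lmain _ _ HB _ e0 e2 [:: e1; e3; e4] erefl Hu' H'.
    exists [:: e0, e2 & t]; split => //.
    rewrite perm_cons; apply: (perm_trans _ (perm_swap e2 e1 _)); by rewrite !perm_cons.
  have [t [Ht Hg]] := @Lmain _ _ HB _ e0 e1 [:: e2; e3; e4] erefl Hu H.
  exists [:: e0, e1 & t]; split => //; by rewrite !perm_cons.
- have [t [Ht Hg]] := @Lmain _ _ HB _ e0 e1 [:: e2, e3, e4, e5 & R'] erefl Hu I.
  exists [:: e0, e1 & t]; split => //; by rewrite !perm_cons.
Qed.
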